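(* Let $\mathfrak{g}$ be a Leibniz algebra whose Schur $\mathrm{Lie}$-multiplier $\mathcal{M}^{\mathrm{Lie}}(\mathfrak{g})$ is finite-dimensional. Then any two $\mathrm{Lie}$-stem covers of $\mathfrak{g}$ are $\mathrm{Lie}$-isoclinic.
   Context: Fix a field $\mathbb{K}$ with $\frac12\in\mathbb{K}$. A Leibniz algebra is a $\mathbb{K}$-vector space with a bilinear bracket satisfying $[x,[y,z]]=[[x,y],z]-[[x,z],y]$. $\mathfrak{p}^{\mathrm{ann}}$ is the span of all $[x,x]$, $\mathfrak{p}_{\mathrm{Lie}}=\mathfrak{p}/\mathfrak{p}^{\mathrm{ann}}$. $[\mathfrak{m},\mathfrak{n}]_{\mathrm{Lie}}$ is the span of all $[m,n]+[n,m]$. $Z_{\mathrm{Lie}}(\mathfrak{p})=\{z:[x,z]+[z,x]=0\ \forall x\}$. An extension $0\to\mathfrak{m}\to\mathfrak{p}\to\mathfrak{g}\to0$ is $\mathrm{Lie}$-central if $\mathfrak{m}\subseteq Z_{\mathrm{Lie}}(\mathfrak{p})$; a $\mathrm{Lie}$-stem extension if moreover $\mathfrak{p}_{\mathrm{Lie}}\to\mathfrak{g}_{\mathrm{Lie}}$ is an isomorphism (equivalently $\mathfrak{m}\subseteq\mathfrak{p}^{\mathrm{ann}}$); a $\mathrm{Lie}$-stem cover if moreover the induced map $\mathcal{M}^{\mathrm{Lie}}(\mathfrak{p})\to\mathcal{M}^{\mathrm{Lie}}(\mathfrak{g})$ is zero. Here for a free presentation $0\to\mathfrak{r}\to\mathfrak{f}\to\mathfrak{g}\to0$,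 $\mathcal{M}^{\mathrm{Lie}}(\mathfrak{g})=\frac{\mathfrak{r}\cap[\mathfrak{f},\mathfrak{f}]_{\mathrm{Lie}}}{[\mathfrak{f},\mathfrak{r}]_{\mathrm{Lie}}}$. For $\mathrm{Lie}$-central extensions $0\to\mathfrak{n}_i\to\mathfrak{g}_i\xrightarrow{\pi_i}\mathfrak{q}_i\to0$ ($i=1,2$), let $C_i:\mathfrak{q}_i\times\mathfrak{q}_i\to[\mathfrak{g}_i,\mathfrak{g}_i]_{\mathrm{Lie}}$, $C_i(\pi_i(x),\pi_i(y))=[x,y]+[y,x]$ (well defined). The extensions are $\mathrm{Lie}$-isoclinic if there are isomorphisms $\eta:\mathfrak{q}_1\to\mathfrak{q}_2$ and $\xi:[\mathfrak{g}_1,\mathfrak{g}_1]_{\mathrm{Lie}}\to[\mathfrak{g}_2,\mathfrak{g}_2]_{\mathrm{Lie}}$ with $\xi\circ C_1=C_2\circ(\eta\times\eta)$. *)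

(* Defs.v *)
(* Leibniz algebras over a field K (char K <> 2 is a
   hypothesis of the main theorem), possibly infinite-dimensional. *)
From HB Require Import structures.
From mathcomp Require Import all_boot all_algebra.
Set Implicit Arguments. Unset Strict Implicit. Unset Printing Implicit Defensive.
Import GRing.Theory.
Local Open Scope ring_scope.

(* (Right) Leibniz algebra: bilinear bracket with
   [x,[y,z]] = [[x,y],z] - [[x,z],y]. *)
Record leibniz (K : fieldType) := Leibniz {
  lcarrier :> lmodType K;
  lbr : lcarrier -> lcarrier -> lcarrier;
  lbr_linl : forall (a : K) (x y z : lcarrier),
      lbr (a *: x + y) z = a *: lbr x z + lbr y z;
  lbr_linr : forall (a : K) (x y z : lcarrier),
      lbr z (a *: x + y) = a *: lbr z x + lbr z y;
  lbr_leibniz : forall x y z : lcarrier,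
      lbr x (lbr y z) = lbr (lbr x y) z - lbr (lbr x z) y }.
Arguments lbr {K} l _ _.

Section Defs.
Variable K : fieldType.

Inductive span (V : lmodType K) (S : V -> Prop) : V -> Prop :=
  | span0 : span S 0
  | spanS (a : K) (x v : V) : S x -> span S v -> span S (a *: x + v).

Definition surj (A B : Type) (f : A -> B) : Prop := forall y, exists x, f x = y.

Definition lhom (A B : leibniz K) (f : A -> B) : Prop :=
  (forall (a : K) (x y : A), f (a *: x + y) = a *: f x + f y) /\
  (forall x y : A, f (lbr A x y) = lbr B (f x) (f y)).

Definition lker (A B : leibniz K) (f : A -> B) : A -> Prop := fun v => f v = 0.

Definition ann (A : leibniz K) : A -> Prop :=
  span (fun v : A => exists x : A, v = lbr A x x).

Definition lie_comm (A : leibniz K) (M N : A -> Prop) : A -> Prop :=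
  span (fun v : A => exists m n, M m /\ N n /\ v = lbr A m n + lbr A n m).

Definition setT_ (A : leibniz K) : A -> Prop := fun _ => True.
Arguments setT_ A : clear implicits.

Definition lie_center (A : leibniz K) : A -> Prop :=
  fun z => forall x : A, lbr A x z + lbr A z x = 0.

Definition is_free (F : leibniz K) (X : Type) (i : X -> F) : Prop :=
  forall (L : leibniz K) (h : X -> L),
    exists f : F -> L, (lhom f /\ forall x, f (i x) = h x) /\
      forall g : F -> L, lhom g -> (forall x, g (i x) = h x) ->
        forall v, g v = f v.

Definition free_pres (F A : leibniz K) (phi : F -> A) : Prop :=
  (exists (X : Type) (i : X -> F), @is_free F X i) /\ lhom phi /\ surj phi.

(* The Lie-multiplier (R cap [F,F]_Lie)/[F,R]_Lie of the presentation phi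
   (R = ker phi) is finite-dimensional. *)
Definition multiplier_findim (F A : leibniz K) (phi : F -> A) : Prop :=
  let R := lker phi in
  exists ws : seq F,
    (forall w, w \in ws -> R w /\ lie_comm (setT_ F) (setT_ F) w) /\
    forall v, R v -> lie_comm (setT_ F) (setT_ F) v ->
      exists u w, span (fun x => x \in ws) u /\ lie_comm (setT_ F) R w /\
                  v = u + w.

Definition lie_multiplier_findim (G : leibniz K) : Prop :=
  exists (F : leibniz K) (phi : F -> G), free_pres phi /\ multiplier_findim phi.

Definition lie_extension (P G : leibniz K) (pi : P -> G) : Prop :=
  lhom pi /\ surj pi.

Definition lie_central (P G : leibniz K) (pi : P -> G) : Prop :=
  lie_extension pi /\ forall v, lker pi v -> lie_center v.

(* Lie-stem: kernel contained in p^ann (equivalent to P_Lie ~ G_Lie). *)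
Definition lie_stem (P G : leibniz K) (pi : P -> G) : Prop :=
  lie_central pi /\ forall v, lker pi v -> ann v.

(* Lie-stem cover: the induced map M^Lie(P) -> M^Lie(G) is zero.  For a free
   presentation phi : F -> P with kernel S, pi o phi is a free presentation
   of G with kernel R containing S, and the induced map is
   (S cap [F,F]_Lie)/[F,S]_Lie -> (R cap [F,F]_Lie)/[F,R]_Lie, v |-> v. *)
Definition lie_stem_cover (P G : leibniz K) (pi : P -> G) : Prop :=
  lie_stem pi /\
  forall (F : leibniz K) (phi : F -> P), free_pres phi ->
    forall v, lker phi v -> lie_comm (setT_ F) (setT_ F) v ->
      lie_comm (setT_ F) (lker (fun x => pi (phi x))) v.

Definition lie_isoclinic (G1 Q1 G2 Q2 : leibniz K)
    (pi1 : G1 -> Q1) (pi2 : G2 -> Q2) : Prop :=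
  let D1 := lie_comm (setT_ G1) (setT_ G1) in
  let D2 := lie_comm (setT_ G2) (setT_ G2) in
  exists (eta : Q1 -> Q2) (xi : G1 -> G2),
    (lhom eta /\ injective eta /\ surj eta) /\
    ((forall (a : K) x y, D1 x -> D1 y -> xi (a *: x + y) = a *: xi x + xi y) /\
     (forall x y, D1 x -> D1 y -> xi (lbr G1 x y) = lbr G2 (xi x) (xi y)) /\
     (forall x, D1 x -> D2 (xi x)) /\
     (forall x y, D1 x -> D1 y -> xi x = xi y -> x = y) /\
     (forall z, D2 z -> exists x, D1 x /\ xi x = z)) /\
    (* xi o C_1 = C_2 o (eta x eta) *)
    (forall (x y : G1) (x' y' : G2),
       pi2 x' = eta (pi1 x) -> pi2 y' = eta (pi1 y) ->
       xi (lbr G1 x y + lbr G1 y x) = lbr G2 x' y' + lbr G2 y' x').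

End Defs.
Arguments setT_ {K} A : rename.

(* Main.v *)
Require Import Defs.
From mathcomp Require Import all_boot all_algebra.
From Stdlib Require Import ClassicalEpsilon.
Set Implicit Arguments. Unset Strict Implicit. Unset Printing Implicit Defensive.
Import GRing.Theory.
Local Open Scope ring_scope.

Notation lspan := Defs.span.
Section H.
Variable K : fieldType.

Lemma lin_props (V W : lmodType K) (f : V -> W)
  (Hf : forall a x y, f (a *: x + y) = a *: f x + f y) :
  f 0 = 0 /\ (forall x y, f (x + y) = f x + f y) /\
  (forall a x, f (a *: x) = a *: f x) /\ (forall x, f (- x) = - f x) /\
  (forall x y, f (x - y) = f x - f y).
Proof.
have f0 : f 0 = 0.
  have H := Hf 1 0 0; rewrite !scale1r addr0 in H.
  by apply: (addrI (f 0)); rewrite -H addr0.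
have fD : forall x y, f (x + y) = f x + f y.
  by move=> x y; have := Hf 1 x y; rewrite !scale1r.
have fZ : forall a x, f (a *: x) = a *: f x.
  by move=> a x; have := Hf a x 0; rewrite !addr0 f0 addr0.
have fN : forall x, f (- x) = - f x.
  by move=> x; rewrite -scaleN1r fZ scaleN1r.
by split=> //; split=> //; split=> //; split=> // x y; rewrite fD fN.
Qed.

Lemma span_add (V : lmodType K) (S : V -> Prop) u v :
  lspan S u -> lspan S v -> lspan S (u + v).
Proof.
elim=> [|a x w Sx _ IH] Hv; first by rewrite add0r.
by rewrite -addrA; apply: spanS => //; apply: IH.
Qed.

Lemma span_scale (V : lmodType K) (S : V -> Prop) b v :
  lspan S v -> lspan S (b *: v).
Proof.
elim=> [|a x w Sx _ IH]; first by rewrite scaler0; apply: span0.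
by rewrite scalerDr scalerA; apply: spanS.
Qed.

Lemma span_sub (V : lmodType K) (S : V -> Prop) u v :
  lspan S u -> lspan S v -> lspan S (u - v).
Proof. by move=> Hu Hv; apply: span_add => //; rewrite -scaleN1r; apply: span_scale. Qed.

Lemma span_gen (V : lmodType K) (S : V -> Prop) x : S x -> lspan S x.
Proof. by move=> Sx; rewrite -[x]addr0 -[x]scale1r; apply: spanS => //; apply: span0. Qed.

Lemma span_mono (V : lmodType K) (S T : V -> Prop) v :
  (forall x, S x -> T x) -> lspan S v -> lspan T v.
Proof.
move=> ST; elim=> [|a x w Sx _ IH]; first exact: span0.
by apply: spanS => //; apply: ST.
Qed.

Lemma span_map (V W : lmodType K) (f : V -> W) (S : V -> Prop) (T : W -> Prop) v
  (Hf : forall a x y, f (a *: x + y) = a *: f x + f y) :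
  (forall x, S x -> T (f x)) -> lspan S v -> lspan T (f v).
Proof.
have [f0 _] := lin_props Hf.
move=> ST; elim=> [|a x w Sx _ IH]; first by rewrite f0; exact: span0.
by rewrite Hf; apply: spanS => //; apply: ST.
Qed.

Lemma span_kill (V W : lmodType K) (f : V -> W) (S : V -> Prop) v
  (Hf : forall a x y, f (a *: x + y) = a *: f x + f y) :
  (forall x, S x -> f x = 0) -> lspan S v -> f v = 0.
Proof.
have [f0 _] := lin_props Hf.
move=> ST; elim=> [|a x w Sx _ IH] //.
by rewrite Hf IH ST // scaler0 addr0.
Qed.

Lemma span_pre (V W : lmodType K) (f : V -> W) (S : V -> Prop) (T : W -> Prop) z
  (Hf : forall a x y, f (a *: x + y) = a *: f x + f y) :
  (forall t, T t -> exists x, S x /\ f x = t) -> lspan T z ->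
  exists v, lspan S v /\ f v = z.
Proof.
have [f0 _] := lin_props Hf.
move=> ST; elim=> [|a x w Tx _ [v [Sv fv]]].
  by exists 0; split=> //; exact: span0.
have [u [Su fu]] := ST _ Tx.
by exists (a *: u + v); split; [apply: spanS | rewrite Hf fu fv].
Qed.


Section L.
Variable A : leibniz K.

Lemma lbrDl x y z : lbr A (x + y) z = lbr A x z + lbr A y z.
Proof. by have [_ [H _]] := lin_props (fun a x y => @lbr_linl K A a x y z). Qed.
Lemma lbrDr x y z : lbr A z (x + y) = lbr A z x + lbr A z y.
Proof. by have [_ [H _]] := lin_props (fun a x y => @lbr_linr K A a x y z). Qed.

Definition DD := lie_comm (setT_ A) (setT_ A).

Lemma lbr_D_right x y : DD y -> lbr A x y = 0.
Proof.
apply: (span_kill (f := lbr A x)) => [a u v|v [m [n [_ [_ ->]]]]].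
  exact: lbr_linr.
by rewrite lbrDr !lbr_leibniz addrA subrK subrr.
Qed.

Lemma center_sq (hK : (2%:R : K) != 0) k : lie_center k -> lbr A k k = 0.
Proof.
move=> Hk; have := Hk k; rewrite -mulr2n -scaler_nat => /eqP.
by rewrite scaler_eq0 (negbTE hK) /= => /eqP.
Qed.

Lemma center_sqD (hK : (2%:R : K) != 0) a k :
  lie_center k -> lbr A (a + k) (a + k) = lbr A a a.
Proof.
move=> Hk; rewrite !lbrDl !lbrDr (center_sq hK Hk) addr0.
by rewrite -addrA Hk addr0.
Qed.

Lemma CDl x y z : lbr A (x + y) z + lbr A z (x + y) =
  (lbr A x z + lbr A z x) + (lbr A y z + lbr A z y).
Proof. by rewrite lbrDl lbrDr addrACA. Qed.

Lemma centerC x y k l : lie_center k -> lie_center l ->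
  lbr A (x + k) (y + l) + lbr A (y + l) (x + k) = lbr A x y + lbr A y x.
Proof.
move=> Hk Hl; rewrite CDl [lbr A k _ + _]addrC Hk addr0.
by rewrite addrC CDl [lbr A l _ + _]addrC Hl addr0 addrC.
Qed.
End L.

Lemma lhom_lin (A B : leibniz K) (f : A -> B) : lhom f ->
  f 0 = 0 /\ (forall x y, f (x + y) = f x + f y) /\
  (forall a x, f (a *: x) = a *: f x) /\ (forall x, f (- x) = - f x) /\
  (forall x y, f (x - y) = f x - f y).
Proof. by move=> [H _]; apply: lin_props. Qed.

Lemma lhom_comp (A B C : leibniz K) (f : A -> B) (g : B -> C) :
  lhom f -> lhom g -> lhom (fun x => g (f x)).
Proof.
move=> [f1 f2] [g1 g2]; split=> [a x y|x y]; first by rewrite f1 g1.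
by rewrite f2 g2.
Qed.

End H.

Section Lift.
Variable K : fieldType.
Hypothesis hK : (2%:R : K) != 0.

Lemma image_span (F P : leibniz K) (psi : F -> P) (S : P -> Prop) z :
  lhom psi -> (forall s, S s -> exists u, psi u = s) -> lspan S z ->
  exists u, psi u = z.
Proof.
move=> [H1 _] HS Hz.
have [v [_ <-]] := span_pre (S := fun _ => True) H1 (fun t Tt => match HS t Tt with
  ex_intro u Hu => ex_intro _ u (conj I Hu) end) Hz.
by exists v.
Qed.

Lemma lift_pres (F G P : leibniz K) X (i : X -> F) (Hfree : is_free i)
  (phi0 : F -> G) (Hphi : lhom phi0) (Sphi : surj phi0) (pi : P -> G)
  (Hpi : lie_stem pi) :
  exists psi : F -> P, free_pres psi /\ forall v, pi (psi v) = phi0 v.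
Proof.
have [[[Hpil Spi] Hcen] Hann] := Hpi.
pose h x := epsilon (inhabits (0 : P)) (fun p => pi p = phi0 (i x)).
have Hh x : pi (h x) = phi0 (i x) by exact: (epsilon_spec _ _ (Spi (phi0 (i x)))).
have [psi [[Hpsi Hpsii] _]] := Hfree P h.
have [f [_ Huniq]] := Hfree G (fun x => phi0 (i x)).
have Hcomp v : pi (psi v) = phi0 v.
  have E1 := Huniq (fun v => pi (psi v)) (lhom_comp Hpsi Hpil)
    (fun x => etrans (f_equal pi (Hpsii x)) (Hh x)) v.
  have E2 := Huniq phi0 Hphi (fun x => erefl) v.
  by rewrite /= in E1; rewrite E1 E2.
exists psi; split=> //; split; first by exists X, i.
split=> // p.
have [pi0 [pD [pZ [pN pB]]]] := lhom_lin Hpil.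
have [_ [psiD _]] := lhom_lin Hpsi.
have [Hpsil Hpsib] := Hpsi.
have Hker q : pi q = 0 -> exists u, psi u = q.
  move=> Hq; apply: (image_span Hpsi _ (Hann q Hq)) => s [x ->].
  have [u Hu] := Sphi (pi x).
  have Hk : lie_center (x - psi u).
    by apply: Hcen; rewrite /Defs.lker pB Hcomp Hu subrr.
  exists (lbr F u u); rewrite Hpsib -(center_sqD hK (psi u) Hk).
  by rewrite addrC subrK.
have [u Hu] := Sphi (pi p).
have [u' Hu'] : exists u', psi u' = p - psi u.
  by apply: Hker; rewrite pB Hcomp Hu subrr.
by exists (u' + u); rewrite psiD Hu' subrK.
Qed.
End Lift.

Section Main.
Variable K : fieldType.

Lemma D_image (A B : leibniz K) (f : A -> B) w : lhom f -> @DD K A w -> @DD K B (f w).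
Proof.
move=> [L Bf]; apply: span_map => // v [m [n [_ [_ ->]]]].
have [_ [fD _]] := lin_props L.
by exists (f m), (f n); rewrite fD !Bf.
Qed.

Lemma D_pre (A B : leibniz K) (f : A -> B) z : lhom f -> surj f -> @DD K B z ->
  exists w, @DD K A w /\ f w = z.
Proof.
move=> [L Bf] Sf; apply: span_pre => // t [m [n [_ [_ ->]]]].
have [_ [fD _]] := lin_props L.
have [u <-] := Sf m; have [v <-] := Sf n.
exists (lbr A u v + lbr A v u); split; last by rewrite fD !Bf.
by exists u, v.
Qed.

Lemma keyA (F G P1 P2 : leibniz K) (pi1 : P1 -> G) (pi2 : P2 -> G)
  (psi1 : F -> P1) (psi2 : F -> P2) (phi0 : F -> G) :
  lie_stem_cover pi1 -> free_pres psi1 -> lie_central pi2 -> lhom psi2 ->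
  (forall v, pi1 (psi1 v) = phi0 v) -> (forall v, pi2 (psi2 v) = phi0 v) ->
  forall w, @DD K F w -> psi1 w = 0 -> psi2 w = 0.
Proof.
move=> [_ Cov] Fp [_ Hc] [L2 B2] E1 E2 w Dw H0.
have Hw := Cov F psi1 Fp w H0 Dw.
apply: (span_kill L2 _ Hw) => v [m [n [_ [Hn ->]]]].
have [_ [p2D _]] := lin_props L2.
rewrite p2D !B2; apply: Hc.
by rewrite /Defs.lker E2 -E1; apply: Hn.
Qed.
End Main.

Theorem mainTheorem13 (K : fieldType) (hK : (2%:R : K) != 0)
    (G : leibniz K) (hM : lie_multiplier_findim G)
    (P1 P2 : leibniz K) (pi1 : P1 -> G) (pi2 : P2 -> G) :
  lie_stem_cover pi1 -> lie_stem_cover pi2 -> lie_isoclinic pi1 pi2.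
Proof.
move=> Cv1 Cv2.
have [[[[Hp1 Sp1] Hc1] Ha1] _] := Cv1.
have [[[[Hp2 Sp2] Hc2] Ha2] _] := Cv2.
have [F [phi0 [[[X [i Hfree]] [Hphi Sphi]] _]]] := hM.
have [psi1 [Fp1 E1]] := lift_pres hK Hfree Hphi Sphi (conj (conj (conj Hp1 Sp1) Hc1) Ha1).
have [psi2 [Fp2 E2]] := lift_pres hK Hfree Hphi Sphi (conj (conj (conj Hp2 Sp2) Hc2) Ha2).
have [_ [Hps1 S1]] := Fp1.
have [_ [Hps2 S2]] := Fp2.
have [L1 B1] := Hps1; have [L2 B2] := Hps2.
have [p10 [p1D [p1Z [p1N p1B]]]] := lhom_lin Hps1.
have [p20 [p2D [p2Z [p2N p2B]]]] := lhom_lin Hps2.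
have K12 := keyA Cv1 Fp1 (conj (conj Hp2 Sp2) Hc2) Hps2 E1 E2.
have K21 := keyA Cv2 Fp2 (conj (conj Hp1 Sp1) Hc1) Hps1 E2 E1.
pose xi (z : P1) := psi2 (epsilon (inhabits (0 : F)) (fun w => @DD K F w /\ psi1 w = z)).
have xi_spec w : @DD K F w -> xi (psi1 w) = psi2 w.
  move=> Dw; rewrite /xi.
  set w' := epsilon _ _.
  have [Dw' Ew'] : @DD K F w' /\ psi1 w' = psi1 w.
    exact: (@epsilon_spec _ (inhabits (0:F)) (fun w0 => @DD K F w0 /\ psi1 w0 = psi1 w)
      (ex_intro _ w (conj Dw erefl))).
  have H0 : psi1 (w' - w) = 0 by rewrite p1B Ew' subrr.
  have := K12 (w' - w) (span_sub Dw' Dw) H0.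
  by rewrite p2B => /eqP; rewrite subr_eq0 => /eqP.
have D0 : @DD K F 0 by exact: span0.
exists (fun g => g), xi.
split; first by split; [split | split=> // y; exists y].
split; first split.
- move=> a x y Dx Dy.
  have [w [Dw <-]] := D_pre Hps1 S1 Dx.
  have [w' [Dw' <-]] := D_pre Hps1 S1 Dy.
  rewrite -L1 !xi_spec //; last by apply: span_add => //; apply: span_scale.
- split.
  move=> x y Dx Dy.
  rewrite (lbr_D_right _ Dy).
  have [w' [Dw' Ew']] := D_pre Hps1 S1 Dy.
  rewrite -p10 xi_spec // p20 -Ew' xi_spec //.
  by rewrite (lbr_D_right _ (D_image Hps2 Dw')).
  split.
  move=> x Dx; have [w [Dw <-]] := D_pre Hps1 S1 Dx.
  by rewrite xi_spec //; apply: D_image.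
  split.
  move=> x y Dx Dy.
  have [w [Dw <-]] := D_pre Hps1 S1 Dx.
  have [w' [Dw' <-]] := D_pre Hps1 S1 Dy.
  rewrite !xi_spec // => E.
  have H0 : psi2 (w - w') = 0 by rewrite p2B E subrr.
  have := K21 (w - w') (span_sub Dw Dw') H0.
  by rewrite p1B => /eqP; rewrite subr_eq0 => /eqP.
  move=> z Dz; have [w [Dw <-]] := D_pre Hps2 S2 Dz.
  by exists (psi1 w); split; [apply: D_image | apply: xi_spec].
- move=> x y x' y' /= Ex Ey.
  have [u Hu] := S1 x; have [v Hv] := S1 y.
  rewrite -Hu -Hv -!B1 -p1D xi_spec; last by apply: span_gen; exists u, v.
  rewrite p2D !B2.
  have -> : psi2 u = x' + (psi2 u - x') by rewrite addrC subrK.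
  have -> : psi2 v = y' + (psi2 v - y') by rewrite addrC subrK.
  have [_ [_ [_ [_ pi2B]]]] := lhom_lin Hp2.
  apply: centerC; apply: Hc2; rewrite /Defs.lker pi2B E2.
    by rewrite Ex -Hu E1 subrr.
  by rewrite Ey -Hv E1 subrr.
Qed.
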